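(* Let $k$ be a field, $G$ a group, $n\ge1$, $V=k^n$, and $\omega=(\alpha,\beta)\in D^1(M_n(k)[G])$. Define $\tau^\omega\colon V^G\to V^G$ by $\tau^\omega(x)(g)=\sum_{h\in G}\alpha(h)x(gh)+\sum_{h\in G}\beta(g)(h)x(gh)$ for $x\in V^G$, $g\in G$. Then $\tau^\omega\in\mathrm{LNUCA}_c(G,k^n)$.
   Context: For a ring $R$ (here $R=M_n(k)$), $R[G]$ is the group ring and $(R[G])[G]$ is the set of finitely supported maps $\beta\colon G\to R[G]$, with $\beta(g)(h)\in R$. $D^1(R[G])$ is the set $R[G]\times(R[G])[G]$ (with a ring structure not needed here). For $g\in G$ and $x\in V^G$, $(gx)(h)=x(g^{-1}h)$. For finite $M\subset G$ and $s\in\mathcal{L}(V^M,V)^G$, $\sigma_s(x)(g)=s(g)((g^{-1}x)\vert_M)$. $\mathrm{LNUCA}_c(G,V)$ is the set of maps $\sigma_s$ with $M$ finite and $s$ constant outside some finite subset of $G$. *)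

(* Defs.v *)
From HB Require Import structures.
From mathcomp Require Import all_boot all_order all_algebra finmap.
From mathcomp Require Import boolp classical_sets functions cardinality fsbigop.
Set Implicit Arguments.
Unset Strict Implicit.
Unset Printing Implicit Defensive.
Import GRing.Theory.
Local Open Scope classical_set_scope.
Local Open Scope ring_scope.

Definition fin_supp (G : choiceType) (T : Type) (z : T) (f : G -> T) : Prop :=
  finite_set [set g | f g <> z].

Definition in_group_ring (k : fieldType) (n : nat) (G : groupType)
  (a : G -> 'M[k]_n) : Prop := fin_supp 0 a.

Definition in_group_ring2 (k : fieldType) (n : nat) (G : groupType)
  (b : G -> G -> 'M[k]_n) : Prop :=
  (forall g, in_group_ring (b g)) /\ fin_supp (fun _ : G => 0 : 'M[k]_n) b.

(* (alpha, beta) is an element of D^1(M_n(k)[G]) = R[G] x (R[G])[G]. *)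
Definition in_D1 (k : fieldType) (n : nat) (G : groupType)
  (alpha : G -> 'M[k]_n) (beta : G -> G -> 'M[k]_n) : Prop :=
  in_group_ring alpha /\ in_group_ring2 beta.

(* V = k^n, represented as column vectors 'cV[k]_n. V^G = G -> 'cV[k]_n. *)

Definition tau_omega (k : fieldType) (n : nat) (G : groupType)
  (alpha : G -> 'M[k]_n) (beta : G -> G -> 'M[k]_n)
  (x : G -> 'cV[k]_n) : G -> 'cV[k]_n :=
  fun g => \sum_(h \in [set: G]) (alpha h *m x (g * h)%g)
         + \sum_(h \in [set: G]) (beta g h *m x (g * h)%g).

Definition lshift (G : groupType) (V : Type) (g : G) (x : G -> V) : G -> V :=
  fun h => x (g^-1 * h)%g.

Definition sigma_s (k : fieldType) (n : nat) (G : groupType) (M : {fset G})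
  (s : G -> {ffun M -> 'cV[k]_n} -> 'cV[k]_n)
  (x : G -> 'cV[k]_n) : G -> 'cV[k]_n :=
  fun g => s g [ffun m : M => lshift (g^-1)%g x (val m)].

Definition LNUCA_c (k : fieldType) (n : nat) (G : groupType)
  (tau : (G -> 'cV[k]_n) -> (G -> 'cV[k]_n)) : Prop :=
  exists (M : {fset G}) (s : G -> {ffun M -> 'cV[k]_n} -> 'cV[k]_n),
    (forall g, linear (s g)) /\
    (exists (F : set G) (c : {ffun M -> 'cV[k]_n} -> 'cV[k]_n),
        finite_set F /\ forall g, ~ F g -> s g = c) /\
    tau = sigma_s s.

(* Main.v *)
Require Import Defs.
From HB Require Import structures.
From mathcomp Require Import all_boot all_order all_algebra finmap.
From mathcomp Require Import boolp classical_sets functions cardinality fsbigop.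

Import GRing.Theory.
Local Open Scope classical_set_scope.
Local Open Scope ring_scope.

Theorem lemma6p1 (k : fieldType) (G : groupType) (n : nat) (hn : (0 < n)%N)
  (alpha : G -> 'M[k]_n) (beta : G -> G -> 'M[k]_n) :
  in_D1 alpha beta ->
  LNUCA_c (tau_omega alpha beta).
Proof.
move=> [Ha [Hb1 Hb2]].
rewrite /in_group_ring /fin_supp in Ha Hb1 Hb2.
set Sa := [set g | alpha g <> 0] in Ha.
set Sb := [set g | beta g <> fun _ => 0] in Hb2.
set S := Sa `|` \bigcup_(g in Sb) [set h | beta g h <> 0].
have finS : finite_set S.
  rewrite finite_setU; split => //.
  apply: bigcup_finite => // g _; exact: Hb1.
pose M := fset_set S.
have notM : forall h, h \notin M -> alpha h = 0 /\ forall g, beta g h = 0.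
  move=> h; rewrite in_fset_set // notin_setE => hS; split.
    by case: (pselect (alpha h = 0)) => // ah; exfalso; apply: hS; left.
  move=> g; case: (pselect (beta g h = 0)) => // bh; exfalso; apply: hS; right; exists g => //=.
  by move=> e; apply: bh; rewrite e.
pose s := fun (g : G) (y : {ffun M -> 'cV[k]_n}) =>
  \sum_(m : M) (alpha (val m) + beta g (val m)) *m y m.
exists M, s; split; [|split].
- move=> g a u v; rewrite /s scaler_sumr -big_split /=; apply: eq_bigr => m _.
  by rewrite !ffunE mulmxDr scalemxAr.
- exists Sb, (fun y => \sum_(m : M) (alpha (val m) + 0) *m y m); split => //.
  move=> g nSb; rewrite /s; apply: funext => y; apply: eq_bigr => m _.
  have -> : beta g = fun _ => 0 by case: (pselect (beta g = fun _ => 0)) => // e; exfalso; apply: nSb.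
  by [].
- apply: funext => x; apply: funext => g.
  rewrite /tau_omega /sigma_s /s.
  rewrite (fsbigTE M); last by move=> i /notM [-> _]; rewrite mul0mx.
  rewrite (fsbigTE M); last by move=> i /notM [_ ->]; rewrite mul0mx.
  rewrite !big_seq_fsetE /= -big_split /=; apply: eq_bigr => m _.
  by rewrite ffunE /Defs.lshift invgK mulmxDl.
Qed.
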